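(* Let $a_1,\dots,a_n\in S^d$. Algorithm 2.9 (described in the context) solves the spherical feasibility problem. That is, it terminates either in step 2 with a point $x^k/\|x^k\|$ satisfying $a_i^Tx^k\ge0$ for all $i$, or in step 3 with a positively spanning subset of $\{a_1,\dots,a_n\}$. Moreover, whenever $Q_{k+1}$ is produced from $Q_k$, $$\mathrm{def}\,Q_{k+1}\le\sqrt{\frac{1-v^2}{1+(\mathrm{def}\,Q_k)^2+2\,\mathrm{def}\,Q_k\,v}}\;\mathrm{def}\,Q_k,\qquad v=v(x^k/\|x^k\|).$$
   Context: $S^d$ is the unit sphere in $\mathbb{R}^{d+1}$ and $O$ is the origin. For $x\in S^d$, the violation is $v(x)=\max\{0,\max_i(-a_i^Tx)\}$. An index $m$ is a most violated constraint for $x$ if $a_m^Tx=\min_j a_j^Tx$. A finite set $Q$ is positively spanning if it is affinely independent and $O\in\mathrm{conv}\,Q$. It is nearly positively spanning if it is affinely independent and the orthogonal projection $O'$ of $O$ onto $\mathrm{aff}\,Q$ lies in $\mathrm{conv}\,Q$; then $\mathrm{def}\,Q=\|O'\|$. The touching sphere of an affinely independent $Q$ is the unique sphere $\{z:\|z-C\|=R\}$ with $C\in\mathrm{aff}\,Q$ containing $Q$. Algorithm 2.9: (1) Choose any $j$ and set $k=1$, $x^1=a_j$, $Q_1=\{a_j\}$. (2) If $x^k/\|x^k\|$ is feasible, stop. Otherwise let $m$ be the index of a most violated constraint for $x^k/\|x^k\|$, and let $y$ be the point on the line through $x^k$ and $a_m$ closest to the origin. (3) If $Q_k\cup\{a_m\}$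 is positively spanning, stop. (4) Compute the center $C$ of the touching sphere of $Q_k\cup\{a_m\}$. (5) If $C\in\mathrm{conv}(Q_k\cup\{a_m\})$, set $x^{k+1}=C$, $Q_{k+1}=Q_k\cup\{a_m\}$ and $k:=k+1$, then go to (2). (6) Otherwise, let $y$ be the point where the segment $\overline{yC}$ meets the relative boundary of $\mathrm{conv}(Q_k\cup\{a_m\})$. Let $F$ be a facet containing $y$, and let $a_j$ be the vertex of $Q_k$ not in $F$. Set $Q_k:=Q_k\setminus\{a_j\}$ and go to (4). *)

(* Defs.v *)
From HB Require Import structures.
From mathcomp Require Import all_boot all_order all_algebra.
From mathcomp Require Import reals.
Set Implicit Arguments. Unset Strict Implicit. Unset Printing Implicit Defensive.
Import Order.TTheory GRing.Theory Num.Theory.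
Local Open Scope ring_scope.

Section Sphere.
Variables (R : realType) (d n : nat).
Notation vec := 'rV[R]_(d.+1).
Variable a : 'I_n -> vec.

Definition dot (u v : vec) : R := \sum_(i < d.+1) u 0 i * v 0 i.
Definition norm (u : vec) : R := Num.sqrt (dot u u).
Definition normalize (u : vec) : vec := (norm u)^-1 *: u.

Definition feasible (z : vec) : Prop := forall i, 0 <= dot (a i) z.
Definition violation (z : vec) : R := \big[Num.max/0]_(i < n) (- dot (a i) z).
Definition most_violated (z : vec) (m : 'I_n) : Prop :=
  forall j, dot (a m) z <= dot (a j) z.

(* subsets Q of {a_1,...,a_n} are represented by index sets S *)
Definition coeffs_on (S : {set 'I_n}) (lam : 'I_n -> R) : Prop :=
  forall i, i \notin S -> lam i = 0.
Definition comb (lam : 'I_n -> R) : vec := \sum_(i < n) lam i *: a i.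
Definition in_aff (S : {set 'I_n}) (p : vec) : Prop :=
  exists lam, coeffs_on S lam /\ \sum_(i < n) lam i = 1 /\ p = comb lam.
Definition in_conv (S : {set 'I_n}) (p : vec) : Prop :=
  exists lam, coeffs_on S lam /\ (forall i, 0 <= lam i) /\
              \sum_(i < n) lam i = 1 /\ p = comb lam.
Definition aff_indep (S : {set 'I_n}) : Prop :=
  forall lam, coeffs_on S lam -> \sum_(i < n) lam i = 0 -> comb lam = 0 ->
    forall i, lam i = 0.
Definition pos_spanning (S : {set 'I_n}) : Prop :=
  aff_indep S /\ in_conv S 0.
Definition proj_aff (S : {set 'I_n}) (o : vec) : Prop :=
  in_aff S o /\ forall i j, i \in S -> j \in S -> dot o (a i - a j) = 0.
Definition near_pos_spanning (S : {set 'I_n}) : Prop :=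
  aff_indep S /\ exists o, proj_aff S o /\ in_conv S o.
Definition touching_center (S : {set 'I_n}) (C : vec) : Prop :=
  in_aff S C /\ exists r, forall i, i \in S -> norm (a i - C) = r.
Definition line_closest (x p y : vec) : Prop :=
  (exists t, y = x + t *: (p - x)) /\ dot y (p - x) = 0.
Definition exit_point (S : {set 'I_n}) (y C y' : vec) : Prop :=
  exists t, 0 <= t <= 1 /\ y' = y + t *: (C - y) /\ in_conv S y' /\
    forall s, t < s <= 1 -> ~ in_conv S (y + s *: (C - y)).

Inductive state : Type :=
| Main of nat & vec & {set 'I_n}
    (* at step (2): k, x^k, Q_k *)
| Inner of nat & vec & {set 'I_n} & {set 'I_n} & 'I_n & vec
    (* at step (4): k, x^k, Q_k as at step (2), current (reduced) Q_k, m, y *)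
| StopFeasible of vec       (* stopped in step (2) with x^k/||x^k|| *)
| StopSpan of {set 'I_n}    (* stopped in step (3) with Q_k u {a_m} *)
| Error.                    (* an instruction of the algorithm is undefined *)

Definition final (s : state) : Prop :=
  match s with StopFeasible _ | StopSpan _ => True | _ => False end.

Inductive step : state -> state -> Prop :=
| st_zero k Q : step (Main k 0 Q) Error
| st_feas k x Q : x != 0 -> feasible (normalize x) ->
    step (Main k x Q) (StopFeasible (normalize x))
| st_degline k x Q m : x != 0 -> ~ feasible (normalize x) ->
    most_violated (normalize x) m -> x = a m -> step (Main k x Q) Error
| st_span k x Q m y : x != 0 -> ~ feasible (normalize x) ->
    most_violated (normalize x) m -> x <> a m -> line_closest x (a m) y ->
    pos_spanning (Q :|: [set m]) ->
    step (Main k x Q) (StopSpan (Q :|: [set m]))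
| st_enter k x Q m y : x != 0 -> ~ feasible (normalize x) ->
    most_violated (normalize x) m -> x <> a m -> line_closest x (a m) y ->
    ~ pos_spanning (Q :|: [set m]) ->
    step (Main k x Q) (Inner k x Q Q m y)
| st_dep k x Q0 Q m y : ~ aff_indep (Q :|: [set m]) ->
    step (Inner k x Q0 Q m y) Error
| st_accept k x Q0 Q m y C : aff_indep (Q :|: [set m]) ->
    touching_center (Q :|: [set m]) C -> in_conv (Q :|: [set m]) C ->
    step (Inner k x Q0 Q m y) (Main k.+1 C (Q :|: [set m]))
| st_badfacet k x Q0 Q m y C y' : aff_indep (Q :|: [set m]) ->
    touching_center (Q :|: [set m]) C -> ~ in_conv (Q :|: [set m]) C ->
    exit_point (Q :|: [set m]) y C y' ->
    in_conv ((Q :|: [set m]) :\ m) y' ->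
    step (Inner k x Q0 Q m y) Error
| st_reduce k x Q0 Q m y C y' j : aff_indep (Q :|: [set m]) ->
    touching_center (Q :|: [set m]) C -> ~ in_conv (Q :|: [set m]) C ->
    exit_point (Q :|: [set m]) y C y' ->
    j \in Q -> j != m ->
    in_conv ((Q :|: [set m]) :\ j) y' ->
    step (Inner k x Q0 Q m y) (Inner k x Q0 (Q :\ j) m y').

Inductive reachable : state -> Prop :=
| reach_init j : reachable (Main 1 (a j) [set j])
| reach_step s s' : reachable s -> step s s' -> reachable s'.

End Sphere.

Arguments Error {R d n}.
Arguments StopFeasible {R d n}.
Arguments StopSpan {R d n}.
Arguments Main {R d n}.
Arguments Inner {R d n}.

(* Main.v *)
Require Import Defs.
From HB Require Import structures.
From mathcomp Require Import all_boot all_order all_algebra.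
From mathcomp Require Import reals boolp ring lra zify.
Import Order.TTheory GRing.Theory Num.Theory.
Local Open Scope ring_scope.
Set Implicit Arguments. Unset Strict Implicit. Unset Printing Implicit Defensive.

Section Geo.
Variables (R : realType) (d n : nat) (a : 'I_n -> 'rV[R]_(d.+1)).
Hypothesis ha : forall i, norm (a i) = 1.
Notation vec := 'rV[R]_(d.+1).
Notation dot := (@dot R d).
Notation norm := (@norm R d).

Lemma dotC (u v : vec) : dot u v = dot v u.
Proof. by rewrite /Defs.dot; apply: eq_bigr => i _; rewrite mulrC. Qed.

Lemma dotDl (u v w : vec) : dot (u + v) w = dot u w + dot v w.
Proof. by rewrite /Defs.dot -big_split; apply: eq_bigr => i _; rewrite !mxE mulrDl. Qed.

Lemma dotZl c (u w : vec) : dot (c *: u) w = c * dot u w.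
Proof. by rewrite /Defs.dot mulr_sumr; apply: eq_bigr => i _; rewrite !mxE mulrA. Qed.

Lemma dotNl (u w : vec) : dot (- u) w = - dot u w.
Proof. by rewrite -scaleN1r dotZl mulN1r. Qed.

Lemma dotBl (u v w : vec) : dot (u - v) w = dot u w - dot v w.
Proof. by rewrite dotDl dotNl. Qed.

Lemma dotDr (u v w : vec) : dot w (u + v) = dot w u + dot w v.
Proof. by rewrite dotC dotDl !(dotC w). Qed.
Lemma dotZr c (u w : vec) : dot w (c *: u) = c * dot w u.
Proof. by rewrite dotC dotZl dotC. Qed.
Lemma dotNr (u w : vec) : dot w (- u) = - dot w u.
Proof. by rewrite dotC dotNl dotC. Qed.
Lemma dotBr (u v w : vec) : dot w (u - v) = dot w u - dot w v.
Proof. by rewrite dotDr dotNr. Qed.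
Lemma dot0l (w : vec) : dot 0 w = 0.
Proof. by rewrite -(scale0r 0) dotZl mul0r. Qed.
Lemma dot0r (w : vec) : dot w 0 = 0.
Proof. by rewrite dotC dot0l. Qed.

Lemma dot_suml I (r : seq I) (P : pred I) (F : I -> vec) w :
  dot (\sum_(k <- r | P k) F k) w = \sum_(k <- r | P k) dot (F k) w.
Proof.
elim/big_rec2: _ => [|k y1 y2 Pk <-]; first by rewrite dot0l.
by rewrite dotDl.
Qed.

Lemma dot_comb lam w : dot (comb a lam) w = \sum_i lam i * dot (a i) w.
Proof. by rewrite /comb dot_suml; apply: eq_bigr => i _; rewrite dotZl. Qed.

Lemma dot_ge0 (u : vec) : 0 <= dot u u.
Proof. by apply: sumr_ge0 => i _; rewrite -expr2 sqr_ge0. Qed.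

Lemma dot_eq0 (u : vec) : dot u u = 0 -> u = 0.
Proof.
move=> H; apply/rowP => i; rewrite mxE.
have := @psumr_eq0P _ _ predT (fun j => u 0 j * u 0 j).
move=> /(_ (fun j _ => ltac:(rewrite -expr2; exact: sqr_ge0)) H i isT).
by move/eqP; rewrite mulf_eq0 orbb => /eqP.
Qed.

Lemma normE2 (u : vec) : norm u ^+ 2 = dot u u.
Proof. by rewrite /Defs.norm sqr_sqrtr // dot_ge0. Qed.

Lemma norm_ge0 (u : vec) : 0 <= norm u.
Proof. exact: sqrtr_ge0. Qed.

Lemma dot_a i : dot (a i) (a i) = 1.
Proof. by rewrite -normE2 ha expr1n. Qed.

Lemma comb_lin (al be : R) lam mu :
  comb a (fun i => al * lam i + be * mu i) = al *: comb a lam + be *: comb a mu.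
Proof.
rewrite /comb !scaler_sumr -big_split; apply: eq_bigr => i _.
by rewrite scalerDl !scalerA.
Qed.


Implicit Types (S Q P : {set 'I_n}) (y C : vec) (v w p z : vec) (lam mu : 'I_n -> R).

Definition orth (v : vec) (S : {set 'I_n}) :=
  forall i j, i \in S -> j \in S -> dot v (a i - a j) = 0.

Lemma orthP1 v S c : (forall i, i \in S -> dot v (a i) = c) -> orth v S.
Proof. by move=> H i j iS jS; rewrite dotBr !H // subrr. Qed.

Lemma aff_nonempty S p : in_aff a S p -> exists k, k \in S.
Proof.
case=> lam [hc [hs _]]; case: (set_0Vmem S) => [S0|[k kS]]; last by exists k.
exfalso; move: hs; rewrite big1 => [/eqP|i _]; first by rewrite eq_sym oner_eq0.
by apply: hc; rewrite S0 in_set0.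
Qed.

Lemma coeffs_sum_eq S lam (f g : 'I_n -> R) : coeffs_on S lam ->
  (forall i, i \in S -> f i = g i) -> \sum_i lam i * f i = \sum_i lam i * g i.
Proof.
move=> hc H; apply: eq_bigr => i _; case: (boolP (i \in S)) => iS.
  by rewrite H.
by rewrite hc // !mul0r.
Qed.

Lemma orth_aff v S p i : orth v S -> in_aff a S p -> i \in S -> dot v p = dot v (a i).
Proof.
move=> ho [lam [hc [hs ->]]] iS; rewrite dotC dot_comb.
rewrite (@coeffs_sum_eq S lam _ (fun _ => dot v (a i))) //.
  by rewrite -mulr_suml hs mul1r.
move=> j jS; rewrite dotC; apply/eqP; rewrite -subr_eq0 -dotBr; apply/eqP; exact: ho.
Qed.

Lemma orth_lin v w s S : orth v S -> orth w S -> orth (v - s *: w) S.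
Proof. by move=> hv hw i j iS jS; rewrite dotBl dotZl hv // hw // mulr0 subr0. Qed.

Lemma orth_sub v S S' : S' \subset S -> orth v S -> orth v S'.
Proof. by move=> /subsetP sub ho i j iS jS; apply: ho; apply: sub. Qed.

Lemma coeffs_sub S S' lam : S \subset S' -> coeffs_on S lam -> coeffs_on S' lam.
Proof. by move=> /subsetP sub hc i iS; apply: hc; apply: contra iS; apply: sub. Qed.

Lemma aff_sub S S' p : S \subset S' -> in_aff a S p -> in_aff a S' p.
Proof. by move=> sub [lam [hc H]]; exists lam; split=> //; exact: coeffs_sub hc. Qed.

Lemma conv_sub S S' p : S \subset S' -> in_conv a S p -> in_conv a S' p.
Proof. by move=> sub [lam [hc H]]; exists lam; split=> //; exact: coeffs_sub hc. Qed.

Lemma indep_sub S S' : S' \subset S -> aff_indep a S -> aff_indep a S'.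
Proof. by move=> sub hi lam hc; apply: hi; exact: coeffs_sub hc. Qed.

Definition ek (k : 'I_n) : 'I_n -> R := fun i => (i == k)%:R.

Lemma sum_ek k : \sum_i ek k i = 1.
Proof.
rewrite (bigD1 k) //= big1 ?addr0 /ek ?eqxx //; move=> i /negbTE -> //.
Qed.

Lemma comb_ek k : comb a (ek k) = a k.
Proof.
rewrite /comb (bigD1 k) //= big1 ?addr0 /ek ?eqxx ?scale1r //.
by move=> i /negbTE ->; rewrite scale0r.
Qed.

Lemma coeffs_ek S k : k \in S -> coeffs_on S (ek k).
Proof. by move=> kS i iS; rewrite /ek; case: eqP => // ik; rewrite ik kS in iS. Qed.

Lemma aff_a S k : k \in S -> in_aff a S (a k).
Proof. by move=> kS; exists (ek k); rewrite sum_ek comb_ek; split=> //; exact: coeffs_ek. Qed.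

Lemma conv_a S k : k \in S -> in_conv a S (a k).
Proof.
move=> kS; exists (ek k); rewrite sum_ek comb_ek; split; first exact: coeffs_ek.
by split=> // i; rewrite /ek ler0n.
Qed.

Lemma sum_lin (al be : R) (lam mu : 'I_n -> R) :
  \sum_i (al * lam i + be * mu i) = al * \sum_i lam i + be * \sum_i mu i.
Proof. by rewrite big_split /= !mulr_sumr. Qed.

Lemma coeffs_lin S (al be : R) lam mu : coeffs_on S lam -> coeffs_on S mu ->
  coeffs_on S (fun i => al * lam i + be * mu i).
Proof. by move=> h1 h2 i iS; rewrite h1 // h2 // !mulr0 addr0. Qed.

Lemma proj_exists_N N : forall S : {set 'I_n}, #|S| = N -> S != set0 ->
  forall z, exists p, in_aff a S p /\ orth (z - p) S.
Proof.
elim: N => [|N IH] S hN hS z.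
  by move: hS; rewrite -cards_eq0 hN.
case/set0Pn: hS => k kS.
set S' := S :\ k.
have hS' : #|S'| = N by move: hN; rewrite (cardsD1 k S) kS add1n => -[].
have subS : S' \subset S by exact: subD1set.
have SE : S = k |: S' by rewrite setD1K.
case: (set_0Vmem S') => [S'0|[k0 k0S]].
  exists (a k); split; first exact: aff_a.
  move=> i j; rewrite SE S'0 setU0 !in_set1 => /eqP -> /eqP ->.
  by rewrite subrr dot0r.
have neS' : S' != set0 by apply/set0Pn; exists k0.
have [p' [hp' op']] := IH S' hS' neS' z.
have [q [hq oq]] := IH S' hS' neS' (a k).
set w := a k - q.
have ow : orth w S' by [].
have key : forall v, orth v S' -> dot v w = 0 -> orth v S.
  move=> v ov vw; apply: (@orthP1 _ _ (dot v q)) => i.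
  rewrite SE in_setU1 => /orP [/eqP ->|iS'].
    by move: vw; rewrite /w dotBr => /eqP; rewrite subr_eq0 => /eqP.
  by rewrite (orth_aff ov hq iS').
have [w0|wn0] := eqVneq (dot w w) 0.
  exists p'; split; first exact: aff_sub hp'.
  apply: key => //; rewrite (dot_eq0 w0) dot0r //.
set s := dot (z - p') w / dot w w.
exists (p' + s *: w); split.
  case: hp' => lp [hlp [slp elp]]; case: hq => lq [hlq [slq elq]].
  exists (fun i => 1 * lp i + s * (1 * ek k i + (-1) * lq i)); split.
    apply: coeffs_lin; first exact: coeffs_sub hlp.
    apply: coeffs_lin; first exact: coeffs_ek.
    exact: coeffs_sub hlq.
  split.
    rewrite !sum_lin sum_ek slq slp; lra.
  rewrite (comb_lin 1 s lp (fun i => 1 * ek k i + (-1) * lq i)) comb_lin comb_ek -elp -elq.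
  by rewrite !scale1r scaleN1r.
have -> : z - (p' + s *: w) = (z - p') - s *: w by rewrite opprD addrA.
apply: key; first exact: orth_lin.
rewrite dotBl dotZl /s mulrAC -mulrA mulfV // mulr1 subrr //.
Qed.

Lemma proj_exists S z : S != set0 -> exists p, in_aff a S p /\ orth (z - p) S.
Proof. move=> hS; exact: proj_exists_N. Qed.

Lemma orthN v S : orth v S -> orth (- v) S.
Proof. by move=> h i j iS jS; rewrite dotNl h // oppr0. Qed.

Lemma proj_exists0 S : S != set0 -> exists o, proj_aff a S o.
Proof.
move=> /(proj_exists 0) [p [hp op]]; exists p; split=> //.
by have := orthN op; rewrite sub0r opprK.
Qed.

Lemma proj_orth S o : proj_aff a S o -> orth o S.
Proof. by case. Qed.

Lemma proj_dot S o p : proj_aff a S o -> in_aff a S p -> dot o p = dot o o.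
Proof.
move=> [ho oo] hp; have [k kS] := aff_nonempty hp.
by rewrite (orth_aff oo hp kS) (orth_aff oo ho kS).
Qed.

Lemma pyth S o p : proj_aff a S o -> in_aff a S p ->
  dot p p = dot o o + dot (p - o) (p - o).
Proof.
move=> ho hp; rewrite !dotBl !dotBr (dotC p o) (proj_dot ho hp); lra.
Qed.

Lemma proj_unique S o1 o2 : proj_aff a S o1 -> proj_aff a S o2 -> o1 = o2.
Proof.
move=> h1 h2; apply/eqP; rewrite -subr_eq0; apply/eqP; apply: dot_eq0.
have := pyth h1 (proj1 h2); have := pyth h2 (proj1 h1).
rewrite -opprB dotNl dotNr opprK; lra.
Qed.

Lemma dot_sub_a (C : vec) i :
  dot (a i - C) (a i - C) = 1 - 2 * dot C (a i) + dot C C.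
Proof. rewrite !dotBl !dotBr dot_a (dotC (a i) C); lra. Qed.

Lemma tc_proj S C : touching_center a S C -> proj_aff a S C.
Proof.
move=> [hC [r hr]]; split=> // i j iS jS.
have : norm (a i - C) ^+ 2 = norm (a j - C) ^+ 2 by rewrite !hr.
rewrite !normE2 !dot_sub_a dotBr; lra.
Qed.

Lemma proj_tc S C : proj_aff a S C -> touching_center a S C.
Proof.
move=> hC; split; first exact: proj1 hC.
have [k kS] := aff_nonempty (proj1 hC).
exists (norm (a k - C)) => i iS; rewrite /Defs.norm !dot_sub_a.
have := proj_orth hC iS kS; rewrite dotBr => /eqP; rewrite subr_eq0 => /eqP ->.
by [].
Qed.

Lemma lerp (u w : vec) t : u + t *: (w - u) = (1 - t) *: u + t *: w.
Proof. by rewrite scalerBr scalerBl scale1r addrA addrAC. Qed.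

Lemma dot_pos x : x != 0 -> 0 < dot x x.
Proof.
move=> hx; rewrite lt_def dot_ge0 andbT; apply/eqP => h.
by move/eqP: hx; apply; apply: dot_eq0.
Qed.

Lemma norm_pos x : x != 0 -> 0 < norm x.
Proof. by move=> hx; rewrite /Defs.norm sqrtr_gt0 dot_pos. Qed.

Lemma dot_normalize w x : dot w (normalize x) = dot w x / norm x.
Proof. by rewrite /normalize dotZr mulrC. Qed.

Lemma norm_normalize x : x != 0 -> norm (normalize x) = 1.
Proof.
move=> hx; have hd := norm_pos hx.
rewrite /Defs.norm /normalize dotZl dotZr -/(Defs.norm x).
have -> : dot x x = norm x ^+ 2 by rewrite normE2.
have -> : (norm x)^-1 * ((norm x)^-1 * norm x ^+ 2) = 1.
  by field; rewrite gt_eqF.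
exact: sqrtr1.
Qed.

Lemma viol_eq u m : most_violated a u m -> ~ feasible a u ->
  violation a u = - dot (a m) u /\ dot (a m) u < 0.
Proof.
move=> hm /existsNP [i /negP]; rewrite -ltNge => hi.
have hm0 : dot (a m) u < 0 by apply: le_lt_trans (hm i) hi.
split=> //; apply/eqP; rewrite eq_le; apply/andP; split.
  apply: bigmax_le; first by rewrite oppr_ge0 ltW.
  by move=> j _; rewrite lerN2 hm.
rewrite /violation; exact: le_bigmax.
Qed.

Definition InvMain x Q := aff_indep a Q /\ proj_aff a Q x /\ in_conv a Q x /\ x != 0.

Definition ratio x := (1 - violation a (normalize x) ^+ 2) /
  (1 + norm x ^+ 2 + 2 * norm x * violation a (normalize x)).

Definition InvInner x (Q0 : {set 'I_n}) Q m y :=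
  InvMain x Q0 /\ ~ feasible a (normalize x) /\ most_violated a (normalize x) m /\
  ~ pos_spanning a (Q0 :|: [set m]) /\ Q \subset Q0 /\ aff_indep a (Q0 :|: [set m]) /\
  (exists lam, coeffs_on (Q :|: [set m]) lam /\ (forall i, 0 <= lam i) /\
     \sum_i lam i = 1 /\ y = comb a lam /\ 0 < lam m) /\
  dot y y < dot x x /\ dot y y <= ratio x * norm x ^+ 2.

Lemma inv_init j : InvMain (a j) [set j].
Proof.
split.
  move=> lam hc hs _ i; have hi : forall i, i != j -> lam i = 0.
    by move=> i' h; apply: hc; rewrite in_set1.
  case: (eqVneq i j) => [->|/hi] //.
  move: hs; rewrite (bigD1 j) //= big1 ?addr0 // => i' /hi //.
split.
  split; first by apply: aff_a; rewrite in_set1.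
  by move=> i k; rewrite !in_set1 => /eqP -> /eqP ->; rewrite subrr dot0r.
split; first by apply: conv_a; rewrite in_set1.
apply/eqP => h; have := dot_a j; rewrite h dot0l => /eqP; rewrite eq_sym oner_eq0.
by [].
Qed.

Lemma enter_inv x (Q0 : {set 'I_n}) m y : InvMain x Q0 -> ~ feasible a (normalize x) ->
  most_violated a (normalize x) m -> line_closest x (a m) y ->
  ~ pos_spanning a (Q0 :|: [set m]) -> InvInner x Q0 Q0 m y.
Proof.
move=> hM hnf hm [[t ->] hy] hns; have [hi [hp [hc hx]]] := hM.
have [hv ham] := viol_eq hm hnf.
set v := violation a (normalize x) in hv *.
set dl := norm x.
have hd : 0 < dl := norm_pos hx.
have hxx : dot x x = dl ^+ 2 by rewrite normE2.
have hamx : dot (a m) x = - v * dl.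
  by move: hv; rewrite dot_normalize -/dl => ->; field; rewrite gt_eqF.
have v0 : 0 < v by rewrite hv oppr_gt0.
have hQ : forall i, i \in Q0 -> dot (a i) x = dl ^+ 2.
  by move=> i iQ; rewrite dotC (proj_dot hp (aff_a iQ)) hxx.
have mQ : m \notin Q0.
  apply/negP => /hQ; rewrite hamx => h.
  have : 0 < dl ^+ 2 by rewrite exprn_gt0.
  by rewrite -h; nra.
split=> //; split=> //; split=> //; split=> //; split; first exact: subxx.
split.
  move=> lam hl hs0 hc0.
  have key : forall i, lam i * dot (a i) x =
      lam i * dl ^+ 2 + ek m i * (lam m * (dot (a m) x - dl ^+ 2)).
    move=> i; rewrite /ek; case: (eqVneq i m) => [->|him]; first by rewrite mul1r; ring.
    rewrite mul0r addr0; case: (boolP (i \in Q0)) => iQ; first by rewrite hQ.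
    by rewrite hl ?mul0r // in_setU in_set1 negb_or iQ him.
  have : dot (comb a lam) x = 0 by rewrite hc0 dot0l.
  rewrite dot_comb (eq_bigr _ (fun i _ => key i)) big_split /= -mulr_suml hs0 mul0r add0r.
  rewrite -mulr_suml sum_ek mul1r => /eqP; rewrite mulf_eq0 => /orP [/eqP lm0|].
    have hl' : coeffs_on Q0 lam.
      move=> i iQ; case: (eqVneq i m) => [->//|him].
      by apply: hl; rewrite in_setU in_set1 negb_or iQ him.
    exact: hi hl' hs0 hc0.
  rewrite hamx => /eqP h; exfalso.
  have : 0 < v * dl by apply: mulr_gt0.
  have : 0 < dl ^+ 2 by rewrite exprn_gt0.
  move: h; lra.
set w := a m - x.
have hww : dot w w = 1 + 2 * dl * v + dl ^+ 2.
  rewrite /w !dotBl !dotBr dot_a (dotC x (a m)) hamx hxx; ring.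
have hD : 0 < dot w w.
  rewrite hww; have : 0 < dl * v by apply: mulr_gt0.
  have : 0 < dl ^+ 2 by rewrite exprn_gt0.
  lra.
have htD : t * dot w w = dl * v + dl ^+ 2.
  move: hy; rewrite -/w dotDl dotZl /w dotBr (dotC x (a m)) hamx hxx -/w.
  lra.
have ht : t = (dl * v + dl ^+ 2) / dot w w.
  by rewrite -htD mulfK // gt_eqF.
have t0 : 0 < t by rewrite ht divr_gt0 // addr_gt0 ?mulr_gt0 ?exprn_gt0.
have t1 : t < 1.
  rewrite ht ltr_pdivrMr // mul1r hww.
  have : 0 < dl * v by apply: mulr_gt0.
  lra.
split.
  case: hc => lx [hlx [lx0 [slx ex]]].
  exists (fun i => (1 - t) * lx i + t * ek m i); split.
    apply: coeffs_lin; first by apply: coeffs_sub hlx; rewrite subsetUl.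
    by apply: coeffs_ek; rewrite in_setU in_set1 eqxx orbT.
  split.
    move=> i; apply: addr_ge0; apply: mulr_ge0;
      [by rewrite subr_ge0 ltW | by [] | exact: ltW | by rewrite /ek; case: (i == m)].
  split; first by rewrite sum_lin slx sum_ek; ring.
  split; first by rewrite comb_lin comb_ek -ex lerp.
  rewrite /ek eqxx mulr1; have : 0 <= (1 - t) * lx m.
    by apply: mulr_ge0 => //; rewrite subr_ge0 ltW.
  lra.
have hyy : dot (x + t *: w) (x + t *: w) = dl ^+ 2 - t * (dl * v + dl ^+ 2).
  rewrite dotDr dotZr hy mulr0 addr0 dotDl dotZl hxx /w dotBl hamx hxx; ring.
rewrite hyy hxx; split.
  have : 0 < t * (dl * v + dl ^+ 2).
    by apply: mulr_gt0 => //; rewrite addr_gt0 ?mulr_gt0 ?exprn_gt0.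
  lra.
rewrite /ratio -/v -/dl ht.
have -> : 1 + dl ^+ 2 + 2 * dl * v = dot w w by rewrite hww; ring.
rewrite le_eqVlt; apply/orP; left; apply/eqP.
have hD' : 1 + 2 * dl * v + dl ^+ 2 != 0 by rewrite -hww gt_eqF.
rewrite hww; field; exact: hD'.
Qed.

Lemma uniq_rep S l1 l2 : aff_indep a S -> coeffs_on S l1 -> coeffs_on S l2 ->
  \sum_i l1 i = \sum_i l2 i -> comb a l1 = comb a l2 -> forall i, l1 i = l2 i.
Proof.
move=> hi h1 h2 hs hc i.
have := hi (fun i => 1 * l1 i + (-1) * l2 i) (coeffs_lin _ _ h1 h2).
rewrite sum_lin comb_lin hs scaleN1r !scale1r hc subrr.
move=> /(_ ltac:(ring) erefl i); lra.
Qed.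

Lemma lerp_sub (y C : vec) s : ((1 - s) *: y + s *: C) - C = (1 - s) *: (y - C).
Proof. by rewrite scalerBr [X in _ = _ - X]scalerBl scale1r opprB addrA. Qed.

Lemma dist_lerp S (y C : vec) s : proj_aff a S C -> in_aff a S y ->
  dot ((1 - s) *: y + s *: C) ((1 - s) *: y + s *: C) =
  dot C C + (1 - s) ^+ 2 * (dot y y - dot C C).
Proof.
move=> hC hy.
have hb : in_aff a S ((1 - s) *: y + s *: C).
  case: hy => l1 [h1 [s1 e1]]; case: (proj1 hC) => l2 [h2 [s2 e2]].
  exists (fun i => (1 - s) * l1 i + s * l2 i); split; first exact: coeffs_lin.
  by rewrite sum_lin comb_lin s1 s2 -e1 -e2; split=> //; ring.
rewrite (pyth hC hb) lerp_sub dotZl dotZr (pyth hC hy); ring.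
Qed.

Lemma inv_y x (Q0 : {set 'I_n}) Q m y : InvInner x Q0 Q m y ->
  exists lam, coeffs_on (Q :|: [set m]) lam /\ (forall i, 0 <= lam i) /\
     \sum_i lam i = 1 /\ y = comb a lam /\ 0 < lam m.
Proof. by case=> _ [_ [_ [_ [_ [_ [H _]]]]]]. Qed.

Lemma inv_indep x (Q0 : {set 'I_n}) Q m y : InvInner x Q0 Q m y ->
  aff_indep a (Q :|: [set m]).
Proof.
case=> _ [_ [_ [_ [sub [hi _]]]]]; apply: indep_sub hi; exact: setSU.
Qed.

Lemma wolfe x (Q0 : {set 'I_n}) Q m y C mu : InvInner x Q0 Q m y ->
  proj_aff a (Q :|: [set m]) C -> coeffs_on (Q :|: [set m]) mu ->
  \sum_i mu i = 1 -> C = comb a mu -> 0 < mu m.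
Proof.
move=> hI hC hmu smu eC; rewrite ltNge; apply/negP => mu0.
have [lam [hl [l0 [sl [ey lm]]]]] := inv_y hI.
case: hI => [[_ [hx _]] [_ [_ [_ [sub [_ [_ [yx _]]]]]]]].
set D := lam m - mu m.
have hD : 0 < D by rewrite /D; lra.
set s := lam m / D.
have s0 : 0 < s by rewrite divr_gt0.
have s1 : s <= 1 by rewrite ler_pdivrMr // mul1r /D; lra.
set ka := fun i => (1 - s) * lam i + s * mu i.
have kam : ka m = 0.
  rewrite /ka /s; have hD' : D != 0 by rewrite gt_eqF.
  rewrite /D in hD' *; field; exact: hD'.
have hkQ : coeffs_on Q ka.
  move=> i iQ; case: (eqVneq i m) => [->//|him].
  by apply: (coeffs_lin (1 - s) s hl hmu); rewrite in_setU in_set1 negb_or iQ him.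
have hy : in_aff a (Q :|: [set m]) y by exists lam.
have hb : in_aff a Q0 ((1 - s) *: y + s *: C).
  exists ka; split; first exact: coeffs_sub hkQ.
  by rewrite sum_lin sl smu ey eC comb_lin; split=> //; ring.
have h1 := pyth hx hb.
have h2 := dist_lerp s hC hy.
have h3 := pyth hC hy.
have h4 := dot_ge0 (y - C).
have h5 := dot_ge0 ((1 - s) *: y + s *: C - x).
have h6 : (1 - s) ^+ 2 <= 1.
  rewrite expr2; have : 0 <= 1 - s by lra.
  nra.
have h7 : dot y y - dot C C >= 0 by lra.
have : (1 - s) ^+ 2 * (dot y y - dot C C) <= dot y y - dot C C.
  by rewrite -[X in _ <= X]mul1r ler_wpM2r.
lra.
Qed.

Lemma inner_C x (Q0 : {set 'I_n}) Q m y C : InvInner x Q0 Q m y ->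
  touching_center a (Q :|: [set m]) C ->
  exists mu, coeffs_on (Q :|: [set m]) mu /\ \sum_i mu i = 1 /\ C = comb a mu /\
    0 < mu m /\ proj_aff a (Q :|: [set m]) C /\ dot C C <= dot y y.
Proof.
move=> hI /tc_proj hC.
have [mu [hmu [smu eC]]] := proj1 hC.
exists mu; do 4 (split=> //); first exact: wolfe hI hC hmu smu eC.
have [lam [hl [l0 [sl [ey lm]]]]] := inv_y hI.
have hy : in_aff a (Q :|: [set m]) y by exists lam.
split=> //; have := pyth hC hy; have := dot_ge0 (y - C); lra.
Qed.

Lemma exit_rep x (Q0 : {set 'I_n}) Q m y C y' S' nu : InvInner x Q0 Q m y ->
  touching_center a (Q :|: [set m]) C -> exit_point a (Q :|: [set m]) y C y' ->
  S' \subset Q :|: [set m] -> coeffs_on S' nu -> \sum_i nu i = 1 -> y' = comb a nu ->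
  0 < nu m /\ dot y' y' <= dot y y.
Proof.
move=> hI htc [t [/andP [t0 t1] [ey' _]]] sub hnu snu enu.
have [mu [hmu [smu [eC [mum [hC Cy]]]]]] := inner_C hI htc.
have [lam [hl [l0 [sl [ey lm]]]]] := inv_y hI.
have hi := inv_indep hI.
have e : forall i, nu i = (1 - t) * lam i + t * mu i.
  apply: (uniq_rep hi); first exact: coeffs_sub hnu.
  - exact: coeffs_lin.
  - by rewrite sum_lin snu sl smu; ring.
  - by rewrite -enu comb_lin -ey -eC ey' lerp.
split.
  rewrite e; case: (ltrP t 1) => ht.
    have : 0 < (1 - t) * lam m by apply: mulr_gt0; lra.
    have : 0 <= t * mu m by apply: mulr_ge0 => //; exact: ltW.
    lra.
  have -> : t = 1 by apply/eqP; rewrite eq_le t1 ht.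
  by rewrite subrr mul0r add0r mul1r.
have hy : in_aff a (Q :|: [set m]) y by exists lam.
rewrite ey' lerp (dist_lerp t hC hy).
have h6 : (1 - t) ^+ 2 <= 1.
  rewrite expr2; have : 0 <= 1 - t by lra.
  nra.
have h7 : dot y y - dot C C >= 0 by lra.
have : (1 - t) ^+ 2 * (dot y y - dot C C) <= dot y y - dot C C.
  by rewrite -[X in _ <= X]mul1r ler_wpM2r.
lra.
Qed.

Lemma badfacet_false x (Q0 : {set 'I_n}) Q m y C y' : InvInner x Q0 Q m y ->
  touching_center a (Q :|: [set m]) C -> exit_point a (Q :|: [set m]) y C y' ->
  ~ in_conv a ((Q :|: [set m]) :\ m) y'.
Proof.
move=> hI htc hex [nu [hnu [_ [snu enu]]]].
have [] := exit_rep hI htc hex (subD1set _ _) hnu snu enu.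
by rewrite hnu ?ltxx // setD11.
Qed.

Lemma reduce_inv x (Q0 : {set 'I_n}) Q m y C y' j : InvInner x Q0 Q m y ->
  touching_center a (Q :|: [set m]) C -> exit_point a (Q :|: [set m]) y C y' ->
  j \in Q -> j != m -> in_conv a ((Q :|: [set m]) :\ j) y' ->
  InvInner x Q0 (Q :\ j) m y'.
Proof.
move=> hI htc hex jQ jm [nu [hnu [nu0 [snu enu]]]].
have [num hy'] := exit_rep hI htc hex (subD1set _ _) hnu snu enu.
case: hI => [hM [hnf [hm [hns [sub [hi [_ [yx yb]]]]]]]].
do 4 (split=> //); split.
  by apply: subset_trans sub; exact: subD1set.
split=> //; split.
  exists nu; split; last by split; [exact: nu0 | split; [exact: snu | split; [exact: enu | exact: num]]].
  apply: coeffs_sub hnu; apply/subsetP => i.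
  rewrite !in_setD1 !in_setU !in_set1 in_setD1.
  by case: (i == j); case: (i == m); case: (i \in Q).
split; lra.
Qed.

Lemma accept_inv x (Q0 : {set 'I_n}) Q m y C : InvInner x Q0 Q m y ->
  touching_center a (Q :|: [set m]) C -> in_conv a (Q :|: [set m]) C ->
  InvMain C (Q :|: [set m]) /\ dot C C < dot x x /\ dot C C <= ratio x * norm x ^+ 2.
Proof.
move=> hI htc hcv.
have [mu [_ [_ [_ [_ [hC Cy]]]]]] := inner_C hI htc.
have hi := inv_indep hI.
case: hI => [hM [hnf [hm [hns [sub [hi0 [_ [yx yb]]]]]]]].
split; last by split; lra.
do 3 (split=> //).
apply/eqP => C0; apply: hns; split=> //.
apply: conv_sub (setSU _ sub) _; by rewrite -C0.
Qed.

Lemma exit_exists x (Q0 : {set 'I_n}) Q m y C : InvInner x Q0 Q m y ->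
  touching_center a (Q :|: [set m]) C -> ~ in_conv a (Q :|: [set m]) C ->
  exists y' j, exit_point a (Q :|: [set m]) y C y' /\ j \in Q /\ j != m /\
    in_conv a ((Q :|: [set m]) :\ j) y'.
Proof.
move=> hI htc hnc.
have [mu [hmu [smu [eC [mum [hC Cy]]]]]] := inner_C hI htc.
have [lam [hl [l0 [sl [ey lm]]]]] := inv_y hI.
have hi := inv_indep hI.
have [i0 hi0] : exists i, mu i < 0.
  case: (pselect (exists i, mu i < 0)) => // hno; exfalso; apply: hnc.
  exists mu; split=> //; split=> // i; rewrite leNgt; apply/negP => h.
  by apply: hno; exists i.
set r := fun i => lam i / (lam i - mu i).
case: (@arg_minP _ _ _ i0 (fun i => mu i < 0) r hi0) => j /= Pj jmin.
set t := r j.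
have Dj : 0 < lam j - mu j by have := l0 j; lra.
have tD : t * (lam j - mu j) = lam j by rewrite /t /r mulfVK // gt_eqF.
have t0 : 0 <= t by rewrite /t /r divr_ge0 // ltW.
have t1 : t < 1 by rewrite /t /r ltr_pdivrMr // mul1r; lra.
set ka := fun i => (1 - t) * lam i + t * mu i.
have ka0 : forall i, 0 <= ka i.
  move=> i; rewrite /ka; case: (ltrP (mu i) 0) => hmi.
    have Di : 0 < lam i - mu i by have := l0 i; lra.
    have := jmin i hmi; rewrite -/t /r ler_pdivlMr // => h; lra.
  apply: addr_ge0; apply: mulr_ge0 => //; lra.
have kaj : ka j = 0 by rewrite /ka; lra.
have hka : coeffs_on (Q :|: [set m]) ka by exact: coeffs_lin.
have ska : \sum_i ka i = 1 by rewrite /ka sum_lin sl smu; ring.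
have eka : y + t *: (C - y) = comb a ka by rewrite /ka comb_lin -ey -eC lerp.
have jS : j \in Q :|: [set m].
  case: (boolP (j \in Q :|: [set m])) => // /hmu h; by move: Pj; rewrite h ltxx.
have jm : j != m by apply/eqP => e; move: Pj; rewrite e; lra.
exists (y + t *: (C - y)), j; split.
  exists t; split; first by rewrite t0 ltW.
  split=> //; split; first by exists ka; rewrite eka.
  move=> s /andP [ts s1] [nu [hnu [nu0 [snu enu]]]].
  have e : forall i, nu i = (1 - s) * lam i + s * mu i.
    apply: (uniq_rep hi) => //; first exact: coeffs_lin.
    - by rewrite sum_lin snu sl smu; ring.
    - by rewrite -enu comb_lin -ey -eC lerp.
  have := nu0 j; rewrite e.
  have : t * (lam j - mu j) < s * (lam j - mu j) by rewrite ltr_pM2r.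
  lra.
split; first by move: jS; rewrite in_setU in_set1 (negbTE jm) orbF.
split=> //.
exists ka; split; last by split=> //; split.
move=> i; rewrite in_setD1 negb_and negbK => /orP [/eqP ->//|iS].
exact: hka.
Qed.

Lemma not_am x m : ~ feasible a (normalize x) -> most_violated a (normalize x) m ->
  x = a m -> False.
Proof.
move=> hnf hm ex; apply: hnf => i; rewrite ex /normalize ha invr1 scale1r.
have := hm i; rewrite ex /normalize ha invr1 scale1r dot_a.
move=> h; apply: le_trans h; exact: ler01.
Qed.

Definition Inv (s : state R d n) : Prop :=
  match s with
  | Main _ x Q => InvMain x Q
  | Inner _ x Q0 Q m y => InvInner x Q0 Q m y
  | StopFeasible z => norm z = 1 /\ feasible a z
  | StopSpan Q => pos_spanning a Q
  | Error => False
  end.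

Lemma step_inv s s' : Inv s -> step a s s' -> Inv s'.
Proof.
move=> hs st; case: st hs => /=.
- by move=> k Q [_ [_ [_ /eqP]]].
- by move=> k x Q hx hf _; split=> //; exact: norm_normalize.
- by move=> k x Q m hx hnf hm ex _; exact: not_am hnf hm ex.
- by [].
- by move=> k x Q m y hx hnf hm _ hl hns hM; exact: enter_inv.
- by move=> k x Q0 Q m y hd hI; apply: hd; exact: inv_indep hI.
- by move=> k x Q0 Q m y C _ htc hcv hI; case: (accept_inv hI htc hcv).
- by move=> k x Q0 Q m y C y' _ htc _ hex hcv hI; exact: badfacet_false hI htc hex hcv.
- by move=> k x Q0 Q m y C y' j _ htc _ hex jQ jm hcv hI; exact: reduce_inv hI htc hex jQ jm hcv.
Qed.

Lemma reach_inv s : reachable a s -> Inv s.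
Proof.
elim=> [j|s1 s2 _ IH st]; first exact: inv_init.
exact: step_inv IH st.
Qed.

Lemma main_progress k x Q : InvMain x Q -> exists s', step a (Main k x Q) s'.
Proof.
move=> [hi [hp [hc hx]]].
case: (pselect (feasible a (normalize x))) => hf.
  by exists (StopFeasible (normalize x)); apply: st_feas.
have [i0 hi0] : exists i, ~ (0 <= dot (a i) (normalize x)) by apply/existsNP.
case: (@arg_minP _ _ _ i0 predT (fun i => dot (a i) (normalize x)) isT) => m _ hmin.
have hm : most_violated a (normalize x) m by move=> j; exact: hmin.
have hxm : x <> a m by move=> e; exact: not_am hf hm e.
set w := a m - x.
have hw : w != 0 by rewrite /w subr_eq0; apply/eqP => e; apply: hxm.
set t := - dot x w / dot w w.
have hl : line_closest x (a m) (x + t *: w).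
  split; first by exists t.
  have hD : dot w w != 0 by rewrite gt_eqF // dot_pos.
  rewrite -/w dotDl dotZl /t; field; exact: hD.
case: (pselect (pos_spanning a (Q :|: [set m]))) => hps.
  by exists (StopSpan (Q :|: [set m])); exact: (st_span k hx hf hm hxm hl hps).
by exists (Inner k x Q Q m (x + t *: w)); apply: st_enter.
Qed.

Lemma inner_progress k x (Q0 : {set 'I_n}) Q m y : InvInner x Q0 Q m y ->
  exists s', step a (Inner k x Q0 Q m y) s'.
Proof.
move=> hI.
have hne : Q :|: [set m] != set0.
  by apply/set0Pn; exists m; rewrite in_setU in_set1 eqxx orbT.
have [C hC] := proj_exists0 hne.
have htc := proj_tc hC.
have hi := inv_indep hI.
case: (pselect (in_conv a (Q :|: [set m]) C)) => hcv.
  by exists (Main k.+1 C (Q :|: [set m])); apply: st_accept.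
have [y' [j [hex [jQ [jm hcj]]]]] := exit_exists hI htc hcv.
by exists (Inner k x Q0 (Q :\ j) m y'); exact: (st_reduce k x Q0 hi htc hcv hex jQ jm hcj).
Qed.

Definition rank (x : vec) : nat :=
  #|[set S : {set 'I_n} | `[< exists o, proj_aff a S o /\ dot o o < dot x x >]]|.

Definition meas (s : state R d n) : nat :=
  match s with
  | Main _ x _ => rank x * (n + 2) + n.+1
  | Inner _ x _ Q _ _ => rank x * (n + 2) + #|Q|
  | _ => 0
  end.

Lemma rank_lt x (C : vec) P : proj_aff a P C -> dot C C < dot x x -> (rank C < rank x)%N.
Proof.
move=> hC hlt; apply: proper_card; apply/properP; split.
  apply/subsetP => S; rewrite !inE => /asboolP [o [ho hoC]].
  by apply/asboolP; exists o; split=> //; lra.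
exists P; rewrite !inE; first by apply/asboolP; exists C.
apply/negP => /asboolP [o [ho hoC]].
by move: hoC; rewrite (proj_unique ho hC) ltxx.
Qed.

Lemma step_dec s s' : Inv s -> step a s s' -> (meas s' < meas s)%N.
Proof.
move=> hs st; case: st hs => /=.
- by move=> k Q [_ [_ [_ /eqP]]].
- move=> *; lia.
- by move=> k x Q m hx hnf hm ex _; case: (not_am hnf hm ex).
- move=> *; lia.
- move=> k x Q m y *.
  have : (#|Q| <= n)%N by rewrite -[n in (_ <= n)%N]card_ord max_card.
  by move=> h; rewrite ltn_add2l ltnS.
- by move=> k x Q0 Q m y hd hI; case: hd; exact: inv_indep hI.
- move=> k x Q0 Q m y C _ htc hcv hI.
  have [[_ [hC _]] [hlt _]] := accept_inv hI htc hcv.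
  move: (rank_lt hC hlt) (#|Q|); move: (rank C) (rank x) => u v huv q.
  apply: (@leq_trans (v * (n + 2))); last exact: leq_addr.
  apply: (@leq_trans (u.+1 * (n + 2))); last by rewrite leq_mul2r huv orbT.
  rewrite mulSn; move: (u * (n + 2)) => w; lia.
- by move=> k x Q0 Q m y C y' _ htc _ hex hcv hI; case: (badfacet_false hI htc hex hcv).
- move=> k x Q0 Q m y C y' j _ _ _ _ jQ _ _ _.
  by rewrite ltn_add2l (cardsD1 j Q) jQ.
Qed.

Lemma acc_all N s : Inv s -> (meas s < N)%N -> Acc (fun t u => step a u t) s.
Proof.
elim: N s => [|N IH] s hs hN; first by [].
constructor => s' st; apply: IH; first exact: step_inv hs st.
have := step_dec hs st; lia.
Qed.

Lemma inner_main_inv k x (Q0 : {set 'I_n}) Q m y k' C P :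
  step a (Inner k x Q0 Q m y) (Main k' C P) ->
  P = Q :|: [set m] /\ touching_center a P C /\ in_conv a P C.
Proof. by move=> st; inversion st; subst. Qed.

Lemma defic k x (Q0 : {set 'I_n}) Q m y C P :
  reachable a (Inner k x Q0 Q m y) -> step a (Inner k x Q0 Q m y) (Main k.+1 C P) ->
  near_pos_spanning a Q0 /\ near_pos_spanning a P /\
  forall o0 o1, proj_aff a Q0 o0 -> proj_aff a P o1 ->
    norm o1 <= Num.sqrt (ratio x) * norm o0.
Proof.
move=> /reach_inv /= hI st.
have [eP [htc hcv]] := inner_main_inv st; subst P.
have [[hi [hC [hcC _]]] [_ hb]] := accept_inv hI htc hcv.
have [[hi0 [hx [hcx hx0]]] _] := hI.
split; first by split=> //; exists x.
split; first by split=> //; exists C.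
move=> o0 o1 h0 h1.
rewrite -(proj_unique hx h0) -(proj_unique hC h1).
have hd := norm_pos hx0.
have hr : 0 <= ratio x.
  have := dot_ge0 C; have : 0 < norm x ^+ 2 by rewrite exprn_gt0.
  move: hb; nra.
rewrite /Defs.norm -/(Defs.norm x).
rewrite -[norm x in X in _ <= X]ger0_norm ?norm_ge0 // -sqrtr_sqr -sqrtrM //.
by rewrite ler_sqrt // mulr_ge0 // sqr_ge0.
Qed.
End Geo.

Unset Implicit Arguments.
Set Strict Implicit.

Theorem lemma2p10 (R : realType) (d n : nat) (a : 'I_n -> 'rV[R]_(d.+1))
    (ha : forall i, norm (a i) = 1) :
  (* the algorithm never gets stuck or hits an undefined instruction *)
  (forall s, reachable a s -> s <> Error /\ (final s \/ exists s', step a s s')) /\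
  (* every run terminates *)
  (forall s, reachable a s -> Acc (fun t u => step a u t) s) /\
  (* correct outputs *)
  (forall z, reachable a (StopFeasible z) -> norm z = 1 /\ feasible a z) /\
  (forall Q, reachable a (StopSpan Q) -> pos_spanning a Q) /\
  (* deficiency decrease whenever Q_{k+1} is produced from Q_k *)
  (forall k x Q0 Q m y C P,
     reachable a (Inner k x Q0 Q m y) ->
     step a (Inner k x Q0 Q m y) (Main k.+1 C P) ->
     near_pos_spanning a Q0 /\ near_pos_spanning a P /\
     forall o0 o1, proj_aff a Q0 o0 -> proj_aff a P o1 ->
       let v := violation a (normalize x) in
       norm o1 <= Num.sqrt ((1 - v ^+ 2) / (1 + norm o0 ^+ 2 + 2 * norm o0 * v))
                  * norm o0).
Proof.
split.
  move=> s /(reach_inv ha) hs; split; first by move=> e; rewrite e in hs.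
  case: s hs => /=.
  - by move=> k x Q hM; right; have := main_progress ha k hM.
  - by move=> k x Q0 Q m y hI; right; have := inner_progress ha k hI.
  - by left.
  - by left.
  - by [].
split.
  move=> s /(reach_inv ha) hs; exact: (@acc_all _ _ _ _ ha (meas a s).+1 s hs).
split; first by move=> z /(reach_inv ha).
split; first by move=> Q /(reach_inv ha).
move=> k x Q0 Q m y C P hr st.
have [h1 [h2 h3]] := defic ha hr st.
split; first exact: h1.
split; first exact: h2.
move=> o0 o1 ho0 ho1.
have hI := reach_inv ha hr.
have [[_ [hx _]] _] := hI.
have := h3 o0 o1 ho0 ho1.
by rewrite -(proj_unique hx ho0) /ratio.
Qed.
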